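(* Let $\mathbb S$ be the free semigroup action on the compact metric space $X$ generated by continuous maps $g_1,\dots,g_p$ with $p\ge2$. Then every point of $\Sigma_p^+\times X$ is an entropy point of $\mathcal F_G$, i.e. $E_p(\Sigma_p^+\times X,\mathcal F_G)=\Sigma_p^+\times X$.
   Context: $\Sigma_p^+=\{1,\dots,p\}^{\mathbb N}$ with metric $D(\omega,\omega')=p^{-\min\{n:\omega_n\ne\omega'_n\}}$ and shift $\sigma$; $\mathcal F_G(\omega,x)=(\sigma\omega,g_{\omega_1}(x))$ on $\Sigma_p^+\times X$ with metric $\max(D,d)$. For $Z\subset\Sigma_p^+\times X$, $h_{top}(Z,\mathcal F_G)=\lim_{\varepsilon\to0}\limsup_n\frac1n\log s_n(Z,\varepsilon)$, with $s_n(Z,\varepsilon)$ the maximal cardinality of an $(n,\varepsilon)$-separated subset of $Z$ for $\mathcal F_G$. A point $z$ is an entropy point of $\mathcal F_G$ if $h_{top}(F,\mathcal F_G)>0$ for every closed neighbourhood $F$ of $z$; $E_p(\Sigma_p^+\times X,\mathcal F_G)$ is the set of such points. *)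

(* Defs.v *)
From HB Require Import structures.
From mathcomp Require Import all_boot all_order all_algebra.
From mathcomp Require Import all_classical all_reals all_analysis.
Set Implicit Arguments. Unset Strict Implicit. Unset Printing Implicit Defensive.
Import Order.TTheory GRing.Theory Num.Theory.
Import numFieldNormedType.Exports.
Local Open Scope classical_set_scope.
Local Open Scope ring_scope.

Section SkewProduct.
Variables (R : realType) (X : metricType R) (p : nat) (g : 'I_p -> X -> X).

(* Sigma_p^+ : one-sided sequences; symbols {1..p} are encoded as 'I_p = {0..p-1},
   and coordinates omega_1, omega_2, ... are encoded as w 0, w 1, ... *)
Definition seqSpace := nat -> 'I_p.

(* D(w,w') = p^{-min{n : w_n <> w'_n}} with 1-based n, i.e. p^{-(k+1)} where k
   is the first 0-based index of disagreement; D(w,w) = 0. *)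
Definition Dseq (w w' : seqSpace) : R :=
  match pselect (exists n, w n != w' n) with
  | left e => (p%:R) ^- (ex_minn e).+1
  | right _ => 0
  end.

Definition pt := (seqSpace * X)%type.

Definition pdist (z z' : pt) : R := Num.max (Dseq z.1 z'.1) (mdist z.2 z'.2).

Definition FG (z : pt) : pt := (fun n => z.1 n.+1, g (z.1 0%N) z.2).

Definition pclosed (F : set pt) : Prop :=
  forall z, (forall r : R, 0 < r -> exists y, F y /\ pdist z y < r) -> F z.
Definition pnbhs (z : pt) (F : set pt) : Prop :=
  exists2 r : R, 0 < r & forall y, pdist z y < r -> F y.

Definition separated (n : nat) (eps : R) (Z : set pt) (m : nat) (f : 'I_m -> pt) :=
  (forall i, Z (f i)) /\
  (forall i j, i != j ->
     exists2 k, (k < n)%N & eps < pdist (iter k FG (f i)) (iter k FG (f j))).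

Definition sn (Z : set pt) (eps : R) (n : nat) : \bar R :=
  ereal_sup [set (m%:R)%:E | m in [set m | exists f : 'I_m -> pt, separated n eps Z f]].

Definition elog (x : \bar R) : \bar R :=
  match x with
  | EFin r => (ln r)%:E
  | +oo%E => +oo%E
  | -oo%E => -oo%E
  end.

Definition htop (Z : set pt) : \bar R :=
  lim ((fun eps : R => limn_esup (fun n : nat => ((n%:R)^-1)%:E * elog (sn Z eps n))%E)
        @ 0^'+).

Definition entropy_point (z : pt) : Prop :=
  forall F : set pt, pclosed F -> pnbhs z F -> (0 < htop F)%E.

Definition Ep : set pt := [set z | entropy_point z].

End SkewProduct.

(* Main.v *)
Require Import Defs.
From HB Require Import structures.
From mathcomp Require Import all_boot all_order all_algebra.
From mathcomp Require Import all_classical all_reals all_analysis.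
From mathcomp Require Import ring.
Set Implicit Arguments. Unset Strict Implicit. Unset Printing Implicit Defensive.
Import Order.TTheory GRing.Theory Num.Theory.
Import numFieldNormedType.Exports.
Local Open Scope classical_set_scope.
Local Open Scope ring_scope.

Section Aux.
Variables (R : realType) (X : metricType R) (p : nat) (g : 'I_p -> X -> X).

Lemma iter_FG1 k (z : pt X p) n : (iter k (FG g) z).1 n = z.1 (n + k)%N.
Proof.
elim: k z n => [|k IH] z n /=; first by rewrite addn0.
by rewrite IH addSnnS.
Qed.

Lemma Dseq_diff0 (w w' : seqSpace p) : w 0%N != w' 0%N -> Dseq R w w' = (p%:R)^-1.
Proof.
move=> h; rewrite /Dseq; case: pselect => [e|]; last by move=> /(_ (ex_intro _ 0%N h)).
case: ex_minnP => m _ /(_ 0%N h); rewrite leqn0 => /eqP ->.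
by rewrite expr1.
Qed.

Lemma Dseq_agree (w w' : seqSpace p) K : (0 < p)%N ->
  (forall n, (n < K)%N -> w n = w' n) -> Dseq R w w' <= (p%:R ^+ K.+1)^-1.
Proof.
move=> p0 h; rewrite /Dseq; case: pselect => [e|]; last first.
  by move=> _; rewrite invr_ge0 exprn_ge0.
case: ex_minnP => m /eqP wm _.
have Km : (K <= m)%N.
  by rewrite leqNgt; apply/negP => /h.
have p1 : (1 <= p%:R :> R) by rewrite ler1n.
rewrite lef_pV2 ?posrE ?exprn_gt0 ?(lt_le_trans ltr01) //.
by apply: ler_weXn2l.
Qed.

Lemma pdistxx (z : pt X p) : pdist z z = 0.
Proof.
rewrite /pdist /Dseq mdistxx; case: pselect => [e|_]; first by exfalso; case: e => n; rewrite eqxx.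
by rewrite maxxx.
Qed.

Lemma sn_lower (F : set (pt X p)) (z : pt X p) : (1 < p)%N -> pnbhs z F ->
  exists K, forall M, (K <= M)%N ->
   ((((p ^ M)%N)%:R)%:E <= sn g F ((p%:R)^-1 / 2) (M + M)%N)%E.
Proof.
move=> p1 [r r0 hr].
have p0 : (0 < p)%N by apply: ltn_trans p1.
have [K hK] : exists K, (p%:R ^+ K.+1)^-1 < r.
  exists (Num.bound r^-1).
  have ri : 0 <= r^-1 by rewrite invr_ge0 ltW.
  have hb := @archi_boundP _ r^-1 ri.
  rewrite -[X in _ < X](invrK r) ltf_pV2 ?posrE ?invr_gt0 ?exprn_gt0 ?ltr0n //.
  apply: (lt_trans hb); rewrite -natrX ltr_nat.
  by apply: leq_ltn_trans (ltn_expl _ p1).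

exists K => M KM.
pose T := {ffun 'I_M -> 'I_p}.
pose sq (t : T) : seqSpace p := fun n =>
  if (n < K)%N then z.1 n else odflt (z.1 n) (omap t (insub (n - K)%N)).
have sqd t (d : 'I_M) : sq t (d + K)%N = t d.
  by rewrite /sq ltnNge leq_addl /= addnK valK.
pose f (i : 'I_#|T|) : pt X p := (sq (enum_val i), z.2).
rewrite /sn; apply: ereal_sup_ubound.
exists #|T|; last by rewrite /T card_ffun !card_ord.
exists f; split.
  move=> i; apply: hr; rewrite /pdist /= mdistxx.
  apply: le_lt_trans hK; rewrite ge_max.
  rewrite invr_ge0 exprn_ge0 ?ler0n // andbT.
  by apply: Dseq_agree => // n nK; rewrite /sq nK.
move=> i j ij.
have ne : enum_val i != enum_val j by apply: contra ij => /eqP /enum_val_inj ->.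
have [d hd] : exists d, enum_val i d != enum_val j d.
  apply/existsP; move: ne; apply: contraR => /existsPn h.
  by apply/eqP/ffunP => d; apply/eqP/negPn/h.
exists (d + K)%N.
  by rewrite (@leq_trans (M + K)%N) ?ltn_add2r ?leq_add2l.
rewrite /pdist.
have -> : Dseq R (iter (d+K) (FG g) (f i)).1 (iter (d+K) (FG g) (f j)).1 = p%:R^-1.
  by apply: Dseq_diff0; rewrite !iter_FG1 /= !add0n !sqd.
rewrite lt_max; apply/orP; left.
rewrite gtr_pMr ?invr_gt0 ?ltr0n // invf_lt1 ?ltr1n //.
Qed.

Local Open Scope ereal_scope.

Lemma sn_anti (F : set (pt X p)) (e1 e2 : R) n : (e1 <= e2)%R ->
  sn g F e2 n <= sn g F e1 n.
Proof.
move=> e12; apply: ereal_sup_le => _ [m [f [hF hsep]] <-].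
exists m => //; exists f; split => // i j ij.
have [k kn hk] := hsep i j ij; exists k => //; exact: le_lt_trans hk.
Qed.

Lemma sn_ge1 (F : set (pt X p)) (z : pt X p) e n : F z -> 1 <= sn g F e n.
Proof.
move=> Fz; rewrite /sn; apply: ereal_sup_ubound; exists 1%N => //.
exists (fun _ => z); split => // i j; by rewrite !ord1 eqxx.
Qed.

Lemma elog_le (a b : \bar R) : 1 <= a -> a <= b -> elog a <= elog b.
Proof.
case: a => [a| |] //; case: b => [b| |] //= a1 ab; rewrite ?leey //.
rewrite lee_fin in a1; rewrite lee_fin in ab; rewrite lee_fin ler_ln // posrE (lt_le_trans ltr01) //.
exact: le_trans ab.
Qed.

Definition ufun (F : set (pt X p)) (eps : R) :=
  fun n : nat => ((n%:R)^-1)%:E * elog (sn g F eps n).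

Lemma fe_anti (F : set (pt X p)) (z : pt X p) (e1 e2 : R) : F z -> (e1 <= e2)%R ->
  limn_esup (ufun F e2) <= limn_esup (ufun F e1).
Proof.
move=> Fz e12; rewrite !limn_esup_lim; apply: lee_lim; try exact: is_cvg_esups.
near=> n; apply: ge_ereal_sup => _ [k nk <-].
apply: le_trans (_ : ufun F e1 k <= _); last first.
  by apply: ereal_sup_ubound; exists k.
apply: lee_wpmul2l; first by rewrite lee_fin invr_ge0 ler0n.
apply: elog_le; first exact: sn_ge1 Fz.
exact: sn_anti.
Unshelve. all: by end_near. Qed.


Lemma u_lower (s : \bar R) M : (1 < p)%N -> (0 < M)%N ->
  (((p ^ M)%N)%:R)%:E <= s ->
  ((ln p%:R / 2)%:E <= (((M + M)%N)%:R^-1)%:E * elog s).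
Proof.
move=> p1 M0; case: s => [s| |] //=; last first.
  by move=> _; rewrite gt0_muley ?leey // lte_fin invr_gt0 ltr0n addn_gt0 M0.
rewrite lee_fin => hs.
have pp : (0 < p%:R :> R)%R by rewrite ltr0n (ltn_trans _ p1).
have h1 : (ln ((p ^ M)%N%:R) <= ln s)%R.
  rewrite ler_ln // posrE ?ltr0n ?expn_gt0 ?(ltn_trans _ p1) //.
  by apply: lt_le_trans hs; rewrite ltr0n expn_gt0 (ltn_trans _ p1).
rewrite natrX lnXn // in h1.
rewrite -EFinM lee_fin.
apply: le_trans (_ : ((M + M)%N%:R^-1 * (ln p%:R *+ M) <= _)%R); last first.
  by rewrite ler_wpM2l // invr_ge0 ler0n.
rewrite -mulr_natr natrD.
have M0' : (M%:R : R) != 0%R by rewrite pnatr_eq0 -lt0n.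
rewrite le_eqVlt; apply/orP; left; apply/eqP; field.
by rewrite -mulr2n mulrn_eq0 negb_or M0'.
Qed.

Definition eps0 : R := ((p%:R)^-1 / 2)%R.

Lemma fe_lower (F : set (pt X p)) (z : pt X p) : (1 < p)%N -> pnbhs z F ->
  (ln p%:R / 2)%:E <= limn_esup (ufun F eps0).
Proof.
move=> p1 hF; have [K hK] := @sn_lower F z p1 hF.
rewrite limn_esup_lim; apply: lime_ge; first exact: is_cvg_esups.
apply: nearW => n.
apply: le_ereal_sup_tmp; exists (ufun F eps0 ((n + K).+1 + (n + K).+1)%N).
  exists ((n + K).+1 + (n + K).+1)%N => //=.
  by rewrite (leq_trans _ (leq_addl _ _)) // ltnW // ltnS leq_addr.
apply: u_lower => //; apply: hK.
by rewrite ltnW // ltnS leq_addl.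
Qed.

End Aux.

Theorem mainTheorem6 (R : realType) (X : metricType R) (p : nat)
  (g : 'I_p -> X -> X) :
  (2 <= p)%N -> compact [set: X] -> (forall i, continuous (g i)) ->
  Ep g = [set: pt X p].
Proof.
move=> p2 _ _; apply/seteqP; split => // z _ F _ hF.
have Fz : F z by case: hF => r r0 h; apply: h; rewrite pdistxx.
have ab : (BRight (0:R) < BInfty R false)%O by [].
have mono : {in Interval (BRight (0:R)) (BInfty R false) &,
   {homo (fun eps => limn_esup (ufun g F eps)) : x y / (x <= y)%R >-> (y <= x)%E}}.
  by move=> x y _ _ xy; exact: fe_anti Fz xy.
have := nonincreasing_at_right_cvge _ ab mono.
rewrite /htop => /cvg_lim ->.
apply: (@lt_le_trans _ _ ((ln p%:R / 2)%:E)).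
  by rewrite lte_fin divr_gt0 // ln_gt0 // ltr1n.
apply: le_trans (fe_lower g p2 hF) _.
apply: ereal_sup_ubound; exists (eps0 R p) => //.
rewrite /= in_itv /= andbT /eps0.

by rewrite divr_gt0 // invr_gt0 ltr0n (ltn_trans _ p2).
exact: ereal_hausdorff.
Qed.
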